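(* If $\gamma\in N(x_v^{-1})$, then $v^{-1}(\gamma) \in \Phi^- \setminus \Delta^-$.
   Context: Let $G$ be a complex linear reductive algebraic group with Borel subgroup $B$, maximal torus $T\subset B$, Weyl group $W$, root system $\Phi$ with positive roots $\Phi^+$, negative roots $\Phi^-$, simple roots $\Delta$, and negative simple roots $\Delta^-=-\Delta$. For $w\in W$ let $N(w)=\{\gamma\in\Phi^+ : w(\gamma)\in\Phi^-\}$ be its inversion set. Let $S\in\mathfrak{h}$ (the Lie algebra of $T$) be a non-regular semisimple element and $M=Z_G(S)$, assumed to be a standard Levi subgroup with positive roots $\Phi_M^+$, and let ${^M W}=\{v\in W : N(v^{-1})\subseteq \Phi^+\setminus\Phi_M^+\}$. Fix $v\in {^M W}$, let $R(v)=N(v)\cap\Delta$, and let $L=L_v$ be the standard Levi subgroup with simple roots $\Delta_L=R(v)$, Weyl group $W_L$, positive roots $\Phi_L^+$ and negative roots $\Phi_L^-$. Let $w_v$ be the longest element of $W_L$ and write $v=x_vw_v$ with $x_v\in W^L=\{w\in W : N(w)\subseteq\Phi^+\setminus\Phi_L^+\}$ and $\ell(v)=\ell(x_v)+\ell(w_v)$ (this decomposition exists and is unique). *)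

(* Defs.v *)
(* Combinatorial model of the root system / Weyl group of a
   complex reductive group G with maximal torus T: roots are column vectors in
   V = X^*(T) (x) R = R^n, equipped with a W-invariant inner product, taken
   to be the standard dot product.  Weyl group elements act on the left as
   matrices: w(gamma) = w *m gamma. *)
From HB Require Import structures.
From mathcomp Require Import all_boot all_order all_algebra.
Set Implicit Arguments. Unset Strict Implicit. Unset Printing Implicit Defensive.
Import Order.TTheory GRing.Theory Num.Theory.
Local Open Scope ring_scope.

Section RootSystems.
Variables (R : realFieldType) (n : nat).
Local Notation vec := 'cV[R]_n.

Definition dot (x y : vec) : R := (x^T *m y) 0 0.

Definition refl_mx (a : vec) : 'M[R]_n := 1%:M - (2 / dot a a) *: (a *m a^T).

Definition refl_prod (s : seq vec) : 'M[R]_n :=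
  foldr (fun a m => refl_mx a *m m) 1%:M s.

Definition root_system (Phi : seq vec) : Prop :=
  [/\ 0 \notin Phi,
      forall a b, a \in Phi -> b \in Phi -> refl_mx a *m b \in Phi,
      forall a b, a \in Phi -> b \in Phi ->
        exists k : int, 2 * dot b a / dot a a = k%:~R
    & forall a (c : R), a \in Phi -> c *: a \in Phi -> c = 1 \/ c = -1].

Definition pos_wrt (Phi S : seq vec) (b : vec) : Prop :=
  b \in Phi /\ exists c : vec -> nat, b = \sum_(d <- S) (c d)%:R *: d.

Definition simple_roots (Phi Delta : seq vec) : Prop :=
  [/\ uniq Delta, {subset Delta <= Phi},
      (forall c : vec -> R, \sum_(d <- Delta) c d *: d = 0 ->
         forall d, d \in Delta -> c d = 0)
    & forall b, b \in Phi -> pos_wrt Phi Delta b \/ pos_wrt Phi Delta (- b)].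

Definition in_W (Phi : seq vec) (w : 'M[R]_n) : Prop :=
  exists s : seq vec, all (mem Phi) s /\ w = refl_prod s.

Definition in_W_gen (S : seq vec) (w : 'M[R]_n) : Prop :=
  exists s : seq vec, all (mem S) s /\ w = refl_prod s.

Definition has_word (Delta : seq vec) (w : 'M[R]_n) (k : nat) : Prop :=
  exists s : seq vec, [/\ size s = k, all (mem Delta) s & w = refl_prod s].
Definition length_is (Delta : seq vec) (w : 'M[R]_n) (k : nat) : Prop :=
  has_word Delta w k /\ forall j, (j < k)%N -> ~ has_word Delta w j.

Definition pos_root (Phi Delta : seq vec) (b : vec) := pos_wrt Phi Delta b.
Definition neg_root (Phi Delta : seq vec) (b : vec) := pos_wrt Phi Delta (- b).
Definition in_N (Phi Delta : seq vec) (w : 'M[R]_n) (g : vec) : Prop :=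
  pos_root Phi Delta g /\ neg_root Phi Delta (w *m g).

(* S in h, given by its real and imaginary parts s1, s2 (linear forms on V):
   alpha(S) = s1 alpha + i s2 alpha *)
Definition vanishes_at (s1 s2 : 'rV[R]_n) (a : vec) : Prop :=
  s1 *m a = 0 /\ s2 *m a = 0.

End RootSystems.

(* Main.v *)
Require Import Defs.
From HB Require Import structures.
From mathcomp Require Import all_boot all_order all_algebra.
From Stdlib Require Import Classical.
Import Order.TTheory GRing.Theory Num.Theory.
Local Open Scope ring_scope.
Set Implicit Arguments. Unset Strict Implicit.

Lemma dotE (R : realFieldType) (n : nat) (x y : 'cV[R]_n) :
  dot x y = \sum_i x i 0 * y i 0.
Proof. by rewrite /dot mxE; apply: eq_bigr => i _; rewrite mxE. Qed.

Lemma dotC (R : realFieldType) (n : nat) (x y : 'cV[R]_n) : dot x y = dot y x.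
Proof. by rewrite !dotE; apply: eq_bigr => i _; rewrite mulrC. Qed.

Lemma dot_self_eq0 (R : realFieldType) (n : nat) (x : 'cV[R]_n) :
  dot x x = 0 -> x = 0.
Proof.
rewrite dotE => H; apply/matrixP => i j; rewrite (ord1 j) mxE.
have hp : forall i, predT i -> 0 <= x i 0 * x i 0 by move=> k _; rewrite -expr2 sqr_ge0.
have := @psumr_eq0P _ _ predT (fun i => x i 0 * x i 0) hp H i isT.
by move/eqP; rewrite mulf_eq0 orbb => /eqP.
Qed.

Lemma mulmx_dot (R : realFieldType) (n : nat) (a x : 'cV[R]_n) :
  a *m (a^T *m x) = dot a x *: a.
Proof. by rewrite [a^T *m x]mx11_scalar mul_mx_scalar. Qed.

Lemma refl_apply (R : realFieldType) (n : nat) (a x : 'cV[R]_n) :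
  refl_mx a *m x = x - (2 / dot a a * dot a x) *: a.
Proof.
by rewrite /refl_mx mulmxBl mul1mx -scalemxAl -mulmxA mulmx_dot scalerA.
Qed.

Lemma refl_sym (R : realFieldType) (n : nat) (a : 'cV[R]_n) :
  (refl_mx a)^T = refl_mx a.
Proof. by rewrite /refl_mx linearB /= trmx1 linearZ /= trmx_mul trmxK. Qed.

Lemma refl_self (R : realFieldType) (n : nat) (a : 'cV[R]_n) :
  dot a a != 0 -> refl_mx a *m a = - a.
Proof.
move=> h; rewrite refl_apply mulfVK // scaler_nat.
by rewrite mulr2n opprD addrA subrr sub0r.
Qed.

Lemma refl_invol (R : realFieldType) (n : nat) (a : 'cV[R]_n) :
  dot a a != 0 -> refl_mx a *m refl_mx a = 1%:M.
Proof.
move=> h; rewrite {2}/refl_mx mulmxBr mulmx1 -scalemxAr mulmxA refl_self //.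
rewrite mulNmx scalerN opprK /refl_mx.
by rewrite subrK.
Qed.

Lemma dotN (R : realFieldType) (n : nat) (a : 'cV[R]_n) : dot (- a) (- a) = dot a a.
Proof. by rewrite !dotE; apply: eq_bigr => i _; rewrite !mxE mulrNN. Qed.

Lemma refl_neg (R : realFieldType) (n : nat) (a : 'cV[R]_n) :
  refl_mx (- a) = refl_mx a.
Proof. by rewrite /refl_mx dotN linearN /= mulNmx mulmxN opprK. Qed.

Lemma dot_orth (R : realFieldType) (n : nat) (u : 'M[R]_n) (a b : 'cV[R]_n) :
  u^T *m u = 1%:M -> dot (u *m a) (u *m b) = dot a b.
Proof. by move=> hu; rewrite /dot trmx_mul mulmxA -(mulmxA a^T) hu mulmx1. Qed.

Lemma refl_conj (R : realFieldType) (n : nat) (u : 'M[R]_n) (a : 'cV[R]_n) :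
  u^T *m u = 1%:M -> refl_mx (u *m a) = u *m refl_mx a *m u^T.
Proof.
move=> hu; have hu' : u *m u^T = 1%:M by apply: mulmx1C.
rewrite /refl_mx dot_orth // mulmxBr mulmx1 mulmxBl hu'.
by rewrite -scalemxAr -scalemxAl trmx_mul !mulmxA.
Qed.

Lemma refl_prod_cat (R : realFieldType) (n : nat) (s t : seq 'cV[R]_n) :
  refl_prod (s ++ t) = refl_prod s *m refl_prod t.
Proof. by elim: s => [|a s IH] /=; rewrite ?mul1mx // IH mulmxA. Qed.

Lemma refl_prod_rcons (R : realFieldType) (n : nat) (s : seq 'cV[R]_n) a :
  refl_prod (rcons s a) = refl_prod s *m refl_mx a.
Proof. by rewrite -cats1 refl_prod_cat /= mulmx1. Qed.

Lemma refl_prod_tr (R : realFieldType) (n : nat) (s : seq 'cV[R]_n) :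
  (refl_prod s)^T = refl_prod (rev s).
Proof.
elim: s => [|a s IH] /=; first by rewrite trmx1.
by rewrite trmx_mul IH refl_sym rev_cons refl_prod_rcons.
Qed.

Lemma refl_prod_orth (R : realFieldType) (n : nat) (s : seq 'cV[R]_n) :
  (forall a, a \in s -> dot a a != 0) -> (refl_prod s)^T *m refl_prod s = 1%:M.
Proof.
elim: s => [|a s IH] /= h; first by rewrite trmx1 mulmx1.
rewrite trmx_mul refl_sym -mulmxA (mulmxA (refl_mx a)) refl_invol ?h ?mem_head //.
by rewrite mul1mx IH // => b hb; apply: h; rewrite inE hb orbT.
Qed.

Lemma invmx_orth (R : realFieldType) (n : nat) (u : 'M[R]_n) :
  u^T *m u = 1%:M -> invmx u = u^T.
Proof.
move=> hu; have hu' : u *m u^T = 1%:M by apply: mulmx1C.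
have hU : u \in unitmx by case: (mulmx1_unit hu').
by rewrite -[invmx u]mulmx1 -hu' mulmxA mulVmx // mul1mx.
Qed.

Definition Lin {R : realFieldType} {n : nat} (D : seq 'cV[R]_n) (f : 'cV[R]_n -> R) :=
  \sum_(d <- D) f d *: d.

Definition cone {R : realFieldType} {n : nat} (D : seq 'cV[R]_n) (x : 'cV[R]_n) :=
  exists h, x = Lin D h /\ forall d, d \in D -> 0 <= h d.

Lemma Lin_add (R : realFieldType) (n : nat) (D : seq 'cV[R]_n) f g :
  Lin D (fun d => f d + g d) = Lin D f + Lin D g.
Proof. by rewrite /Lin -big_split; apply: eq_bigr => d _; rewrite scalerDl. Qed.

Lemma Lin_scale (R : realFieldType) (n : nat) (D : seq 'cV[R]_n) (c : R) f :
  Lin D (fun d => c * f d) = c *: Lin D f.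
Proof. by rewrite /Lin scaler_sumr; apply: eq_bigr => d _; rewrite scalerA. Qed.

Lemma Lin_opp (R : realFieldType) (n : nat) (D : seq 'cV[R]_n) f :
  Lin D (fun d => - f d) = - Lin D f.
Proof. by rewrite /Lin -sumrN; apply: eq_bigr => d _; rewrite scaleNr. Qed.

Lemma Lin_ext (R : realFieldType) (n : nat) (D : seq 'cV[R]_n) f g :
  (forall d, d \in D -> f d = g d) -> Lin D f = Lin D g.
Proof. by move=> h; rewrite /Lin; apply: eq_big_seq => d hd; rewrite h. Qed.

Lemma Lin_zero (R : realFieldType) (n : nat) (D : seq 'cV[R]_n) f :
  (forall d, d \in D -> f d = 0) -> Lin D f = 0.
Proof. by move=> h; rewrite /Lin big1_seq // => d /andP[_ hd]; rewrite h ?scale0r. Qed.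

Lemma Lin_ind (R : realFieldType) (n : nat) (D : seq 'cV[R]_n) a :
  uniq D -> a \in D -> Lin D (fun d => (d == a)%:R) = a.
Proof.
move=> hu ha; rewrite /Lin (bigD1_seq a) //= eqxx scale1r big1 ?addr0 //.
by move=> d /negPf ->; rewrite scale0r.
Qed.

Lemma Lin_inj (R : realFieldType) (n : nat) (Phi D : seq 'cV[R]_n) f g :
  simple_roots Phi D -> Lin D f = Lin D g -> forall d, d \in D -> f d = g d.
Proof.
case=> _ _ hind _ h d hd; apply/eqP; rewrite -subr_eq0; apply/eqP.
apply: (hind (fun d => f d - g d)) => //.
have -> : \sum_(d0 <- D) (f d0 - g d0) *: d0 = Lin D (fun d => f d + - g d) by [].
by rewrite Lin_add Lin_opp h subrr.
Qed.

Lemma cone_add (R : realFieldType) (n : nat) (D : seq 'cV[R]_n) x y :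
  cone D x -> cone D y -> cone D (x + y).
Proof.
move=> [f [-> hf]] [g [-> hg]]; exists (fun d => f d + g d); split.
  by rewrite Lin_add.
by move=> d hd; rewrite addr_ge0 ?hf ?hg.
Qed.

Lemma cone_scale (R : realFieldType) (n : nat) (D : seq 'cV[R]_n) (c : R) x :
  0 <= c -> cone D x -> cone D (c *: x).
Proof.
move=> hc [f [-> hf]]; exists (fun d => c * f d); split; first by rewrite Lin_scale.
by move=> d hd; rewrite mulr_ge0 ?hf.
Qed.

Lemma cone0 (R : realFieldType) (n : nat) (D : seq 'cV[R]_n) : cone D 0.
Proof. by exists (fun _ => 0); split => //; rewrite Lin_zero. Qed.

Lemma cone_pointed (R : realFieldType) (n : nat) (Phi D : seq 'cV[R]_n) x :
  simple_roots Phi D -> cone D x -> cone D (- x) -> x = 0.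
Proof.
move=> hD [f [hx hf]] [g [hx' hg]].
have h0 : Lin D (fun d => f d + g d) = Lin D (fun _ => 0).
  by rewrite Lin_add -hx -hx' subrr Lin_zero.
rewrite hx; apply: Lin_zero => d hd.
have := Lin_inj hD h0 hd => /eqP; rewrite paddr_eq0 ?hf ?hg //.
by case/andP => /eqP.
Qed.

Lemma pos_cone (R : realFieldType) (n : nat) (Phi D : seq 'cV[R]_n) b :
  pos_wrt Phi D b -> cone D b.
Proof. by case=> _ [c ->]; exists (fun d => (c d)%:R); split => // d _; rewrite ler0n. Qed.

Lemma pos_in (R : realFieldType) (n : nat) (Phi D : seq 'cV[R]_n) b :
  pos_wrt Phi D b -> b \in Phi.
Proof. by case. Qed.

Lemma pos_neg_false (R : realFieldType) (n : nat) (Phi D : seq 'cV[R]_n) b :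
  root_system Phi -> simple_roots Phi D ->
  pos_wrt Phi D b -> pos_wrt Phi D (- b) -> False.
Proof.
move=> [h0 _ _ _] hD hp hn.
have := cone_pointed hD (pos_cone hp) (pos_cone hn) => hb.
by move: (pos_in hp) h0; rewrite hb => ->.
Qed.

Lemma pos_simple (R : realFieldType) (n : nat) (Phi D : seq 'cV[R]_n) a :
  simple_roots Phi D -> a \in D -> pos_wrt Phi D a.
Proof.
move=> [hu hs _ _] ha; split; first exact: hs.
exists (fun d => nat_of_bool (d == a)).
by rewrite -{1}(Lin_ind hu ha); apply: eq_bigr => d _; case: (d == a).
Qed.

Lemma root_neq0 (R : realFieldType) (n : nat) (Phi : seq 'cV[R]_n) a :
  root_system Phi -> a \in Phi -> dot a a != 0.
Proof.
move=> [h0 _ _ _] ha; apply/eqP => /dot_self_eq0 ha0.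
by move: ha h0; rewrite ha0 => ->.
Qed.

Lemma simple_refl_pos (R : realFieldType) (n : nat) (Phi D : seq 'cV[R]_n) a b :
  root_system Phi -> simple_roots Phi D -> a \in D ->
  pos_wrt Phi D b -> b != a -> pos_wrt Phi D (refl_mx a *m b).
Proof.
move=> hPhi hD ha hb hba.
have hD' := hD; case: hD' => [hu hs _ hdich].
have hPhi' := hPhi; case: hPhi' => [_ hrefl _ hred].
have hr : refl_mx a *m b \in Phi by apply: hrefl; [apply: hs | apply: pos_in hb].
case: (hdich _ hr) => // hn; exfalso.
case: hb => hbP [c hc]; case: hn => _ [c' hc'].
set k := 2 / dot a a * dot a b.
have eq1 : Lin D (fun d => (c d)%:R + (c' d)%:R) = Lin D (fun d => k * (d == a)%:R).
  rewrite Lin_add Lin_scale Lin_ind //.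
  have -> : Lin D (fun d => (c d)%:R) = b by rewrite hc.
  have -> : Lin D (fun d => (c' d)%:R) = - (refl_mx a *m b) by rewrite hc'.
  by rewrite refl_apply opprB addrC subrK.
have hz : forall d, d \in D -> d != a -> c d = 0%N.
  move=> d hd hda; have := Lin_inj hD eq1 hd; rewrite (negPf hda) mulr0 => /eqP.
  by rewrite -natrD pnatr_eq0 addn_eq0 => /andP[/eqP].
have hb' : b = (c a)%:R *: a.
  have -> : (c a)%:R *: a = Lin D (fun d => (c a)%:R * (d == a)%:R) :> 'cV[R]_n.
    by rewrite Lin_scale Lin_ind.
  rewrite hc; apply: Lin_ext => d hd.
  case: (eqVneq d a) => [->|hda]; first by rewrite mulr1.
  by rewrite hz // mulr0.
have : (c a)%:R *: a \in Phi by rewrite -hb'.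
case/(hred _ _ (hs _ ha)) => hca.
  by move: hba; rewrite hb' hca scale1r eqxx.
by move: (ler0n R (c a)); rewrite hca ler0N1.
Qed.

Lemma W_Phi (R : realFieldType) (n : nat) (Phi : seq 'cV[R]_n) s b :
  root_system Phi -> all (mem Phi) s -> b \in Phi -> refl_prod s *m b \in Phi.
Proof.
move=> [_ hr _ _]; elim: s => [|a s IH] /=; first by rewrite mul1mx.
by case/andP => ha hs hb; rewrite -mulmxA; apply: hr => //; apply: IH.
Qed.

Lemma W_orth (R : realFieldType) (n : nat) (Phi : seq 'cV[R]_n) s :
  root_system Phi -> all (mem Phi) s -> (refl_prod s)^T *m refl_prod s = 1%:M.
Proof.
move=> hP hs; apply: refl_prod_orth => a ha; apply: (root_neq0 hP).
by move/allP: hs => /(_ a ha).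
Qed.

Lemma sub_all (R : realFieldType) (n : nat) (A B : seq 'cV[R]_n) s :
  {subset A <= B} -> all (mem A) s -> all (mem B) s.
Proof. by move=> hAB /allP h; apply/allP => x /h /hAB. Qed.

Lemma exchange (R : realFieldType) (n : nat) (Phi D : seq 'cV[R]_n) :
  root_system Phi -> simple_roots Phi D -> forall s, all (mem D) s ->
  forall g, pos_wrt Phi D g -> pos_wrt Phi D (- (refl_prod s *m g)) ->
  exists t, [/\ size s = (size t).+1, all (mem D) t &
                refl_prod s *m refl_mx g = refl_prod t].
Proof.
move=> hP hD; have hD' := hD; case: hD' => [_ hs _ hdich].
elim=> [|a s IH] /=.
  by move=> _ g hg; rewrite mul1mx => hn; case: (pos_neg_false hP hD hg hn).
case/andP => ha hall g hg hn.
have hgP := pos_in hg.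
have hu'g : refl_prod s *m g \in Phi.
  by apply: W_Phi => //; apply: sub_all hall.
have horth : (refl_prod s)^T *m refl_prod s = 1%:M.
  by apply: (W_orth hP); apply: sub_all hall.
case: (hdich _ hu'g) => hc; last first.
  have [t [ht1 ht2 ht3]] := IH hall g hg hc.
  by exists (a :: t); split => //=; rewrite ?ht1 ?ha // -mulmxA ht3.
case: (eqVneq (refl_prod s *m g) a) => hga; last first.
  have := simple_refl_pos hP hD ha hc hga; rewrite mulmxA => hp.
  by case: (pos_neg_false hP hD hp hn).
exists s; split => //.
rewrite -hga refl_conj // -!mulmxA (mulmxA _ (refl_prod s)) horth mul1mx.
by rewrite refl_invol ?mulmx1 // (root_neq0 hP hgP).
Qed.

Lemma length_exists (R : realFieldType) (n : nat) (D : seq 'cV[R]_n) u m :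
  has_word D u m -> exists k, length_is D u k.
Proof.
elim: m {-2}m (leqnn m) => [|N IH] m hm hw.
  by exists m; split => // j hj; move: (leq_trans hj hm).
case: (classic (exists j, (j < m)%N /\ has_word D u j)) => [[j [hj hwj]]|hno].
  by apply: (IH j) => //; rewrite -ltnS (leq_trans hj hm).
by exists m; split => // j hj hwj; apply: hno; exists j.
Qed.

Lemma longest_neg (R : realFieldType) (n : nat) (Phi D DL : seq 'cV[R]_n) wv k d :
  root_system Phi -> simple_roots Phi D -> {subset DL <= D} ->
  in_W_gen DL wv -> length_is D wv k ->
  (forall u k', in_W_gen DL u -> length_is D u k' -> (k' <= k)%N) ->
  d \in DL -> pos_wrt Phi D (- (wv *m d)).
Proof.
move=> hP hD hDL [s [hsL ->]] [[w [hw1 hw2 hw3]] hmin] hmax hd.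
have hD' := hD; case: hD' => [_ hs _ hdich].
have hdD : d \in D by apply: hDL.
have hwd : refl_prod s *m d \in Phi.
  by apply: W_Phi => //; [apply: sub_all hsL => x /hDL /hs | apply: hs].
case: (hdich _ hwd) => // hpos; exfalso.
set u := refl_prod s *m refl_mx d.
have huL : in_W_gen DL u.
  by exists (rcons s d); rewrite refl_prod_rcons all_rcons; split => //; apply/andP.
have hwu : has_word D u (k.+1).
  exists (rcons w d); rewrite size_rcons hw1 all_rcons refl_prod_rcons /u hw3.
  by split => //; apply/andP.
have [k' hk'] := length_exists hwu.
have hk'le := hmax _ _ huL hk'.
case: hk' => [[t [ht1 ht2 ht3]] _].
have hn : pos_wrt Phi D (- (refl_prod t *m d)).
  rewrite -ht3 /u -mulmxA refl_self ?(root_neq0 hP (hs _ hdD)) //.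
  by rewrite mulmxN opprK.
have [t' [ht'1 ht'2 ht'3]] := exchange hP hD ht2 (pos_simple hD hdD) hn.
move: ht'3; rewrite -ht3 /u -mulmxA refl_invol ?(root_neq0 hP (hs _ hdD)) // mulmx1.
move=> heq.
apply: (hmin (size t')); last by exists t'; split => //; rewrite -hw3 heq.
by rewrite -ltnS -ht'1 ht1.
Qed.

Definition spanL {R : realFieldType} {n : nat} (D DL : seq 'cV[R]_n) (x : 'cV[R]_n) :=
  exists f, x = Lin D f /\ forall d, d \in D -> d \notin DL -> f d = 0.

Lemma spanL_simple (R : realFieldType) (n : nat) (D DL : seq 'cV[R]_n) a :
  uniq D -> {subset DL <= D} -> a \in DL -> spanL D DL a.
Proof.
move=> hu hDL ha; exists (fun d => (d == a)%:R); split; first by rewrite Lin_ind // hDL.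
by move=> d _ hd; case: (eqVneq d a) => // hda; move: hd; rewrite hda ha.
Qed.

Lemma spanL_refl (R : realFieldType) (n : nat) (D DL : seq 'cV[R]_n) a x :
  uniq D -> {subset DL <= D} -> a \in DL -> spanL D DL x -> spanL D DL (refl_mx a *m x).
Proof.
move=> hu hDL ha [f [hx hf]].
set k := 2 / dot a a * dot a x.
exists (fun d => f d + - (k * (d == a)%:R)); split.
  by rewrite Lin_add Lin_opp Lin_scale Lin_ind ?hDL // -hx refl_apply.
move=> d hd hdn; rewrite hf //; case: (eqVneq d a) => [hda|_].
  by move: hdn; rewrite hda ha.
by rewrite mulr0 oppr0 addr0.
Qed.

Lemma spanL_W (R : realFieldType) (n : nat) (D DL : seq 'cV[R]_n) s x :
  uniq D -> {subset DL <= D} -> all (mem DL) s -> spanL D DL x ->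
  spanL D DL (refl_prod s *m x).
Proof.
move=> hu hDL; elim: s => [|a s IH] /=; first by rewrite mul1mx.
by case/andP => ha hs hx; rewrite -mulmxA; apply: spanL_refl => //; apply: IH.
Qed.

Lemma posnotL_W (R : realFieldType) (n : nat) (Phi D DL : seq 'cV[R]_n) s b :
  root_system Phi -> simple_roots Phi D -> {subset DL <= D} ->
  all (mem DL) s -> pos_wrt Phi D b -> ~ spanL D DL b ->
  pos_wrt Phi D (refl_prod s *m b) /\ ~ spanL D DL (refl_prod s *m b).
Proof.
move=> hP hD hDL; have hD' := hD; case: hD' => [hu hs _ _].
elim: s => [|a s IH] /=; first by rewrite mul1mx.
case/andP => ha hall hb hnb; have [hp hnp] := IH hall hb hnb.
rewrite -mulmxA; split.
  apply: simple_refl_pos => //; first exact: hDL.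
  by apply/eqP => he; apply: hnp; rewrite he; apply: spanL_simple.
move=> hsp; apply: hnp.
have := spanL_refl hu hDL ha hsp.
by rewrite mulmxA refl_invol ?mul1mx // (root_neq0 hP (hs _ (hDL _ ha))).
Qed.

Lemma neg_image (R : realFieldType) (n : nat) (Phi D DL : seq 'cV[R]_n) (w : 'M[R]_n) g :
  simple_roots Phi D -> {subset DL <= D} ->
  (forall d, d \in DL -> pos_wrt Phi D (- (w *m d))) ->
  pos_wrt Phi D g -> spanL D DL g -> cone D (- (w *m g)).
Proof.
move=> hD hDL hw hg [f [hf hf0]].
case: hg => _ [c hc].
have hcf : forall d, d \in D -> d \notin DL -> c d = 0%N.
  move=> d hd hdn; have h1 : Lin D (fun d => (c d)%:R) = Lin D f by rewrite -hf hc.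
  by have := Lin_inj hD h1 hd; rewrite hf0 // => /eqP; rewrite pnatr_eq0 => /eqP.
rewrite hc mulmx_sumr -sumrN big_seq.
apply: (big_ind (cone D)); [exact: cone0 | exact: cone_add |].
move=> d hd; rewrite -scalemxAr -scalerN.
case: (boolP (d \in DL)) => hdL.
  by apply: cone_scale; [apply: ler0n | apply: pos_cone; apply: hw].
by rewrite hcf // scale0r; apply: cone0.
Qed.
Unset Implicit Arguments. Set Strict Implicit.

Theorem mainTheorem1 (R : realFieldType) (n : nat)
  (Phi Delta : seq 'cV[R]_n)
  (hPhi : root_system Phi) (hDelta : simple_roots Phi Delta)
  (* S in h, non-regular, with M = Z_G(S) the standard Levi with simple roots DM *)
  (s1 s2 : 'rV[R]_n) (DM : seq 'cV[R]_n)
  (hSnonreg : exists a, a \in Phi /\ vanishes_at s1 s2 a)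
  (hDM : {subset DM <= Delta})
  (hM : forall a, a \in Phi ->
          (vanishes_at s1 s2 a <-> pos_wrt Phi DM a \/ pos_wrt Phi DM (- a)))
  (* v in ^M W *)
  (v : 'M[R]_n) (hvW : in_W Phi v)
  (hvM : forall g, in_N Phi Delta (invmx v) g -> ~ pos_wrt Phi DM g)
  (* Delta_L = R(v) = N(v) cap Delta *)
  (DL : seq 'cV[R]_n)
  (hDL : forall a, a \in DL <-> a \in Delta /\ in_N Phi Delta v a)
  (* w_v = longest element of W_L *)
  (wv : 'M[R]_n) (hwvL : in_W_gen DL wv)
  (hwvlong : exists k, length_is Delta wv k /\
      forall u k', in_W_gen DL u -> length_is Delta u k' -> (k' <= k)%N)
  (* v = x_v w_v with x_v in W^L and l(v) = l(x_v) + l(w_v) *)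
  (xv : 'M[R]_n) (hxW : in_W Phi xv)
  (hxL : forall g, in_N Phi Delta xv g -> ~ pos_wrt Phi DL g)
  (hdec : v = xv *m wv)
  (hlen : exists a b, [/\ length_is Delta xv a, length_is Delta wv b
                        & length_is Delta v (a + b)])
  (g : 'cV[R]_n) (hg : in_N Phi Delta (invmx xv) g) :
  neg_root Phi Delta (invmx v *m g) /\ ~ (- (invmx v *m g) \in Delta).
Proof.
case: hwvlong => kk [hkk hmax].
have hD' := hDelta; case: hD' => [hu hs _ hdich].
have hP' := hPhi; case: hPhi => [h0 _ _ _].
have hDLD : {subset DL <= Delta} by move=> x /hDL [].
have hDLP : {subset DL <= Phi} by move=> x /hDLD /hs.
case: hxW => sx [hsx hxe].
case: hwvL => sw [hsw hwe].
have hxo : xv^T *m xv = 1%:M by rewrite hxe; apply: (W_orth hP').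
have hwo : wv^T *m wv = 1%:M by rewrite hwe; apply: (W_orth hP'); apply: sub_all hsw.
have hxo' : xv *m xv^T = 1%:M by apply: mulmx1C.
have hwo' : wv *m wv^T = 1%:M by apply: mulmx1C.
have hvo : v^T *m v = 1%:M.
  by rewrite hdec trmx_mul mulmxA -(mulmxA _ xv^T) hxo mulmx1 hwo.
rewrite !invmx_orth // in hg *.
case: hg => hgpos hx'neg.
set beta := - (xv^T *m g).
have hbpos : pos_wrt Phi Delta beta := hx'neg.
have hxb : xv *m beta = - g by rewrite /beta mulmxN mulmxA hxo' mul1mx.
have hbP : beta \in Phi := pos_in hbpos.
have hwtr : wv^T = refl_prod (rev sw) by rewrite hwe refl_prod_tr.
have hrevL : all (mem DL) (rev sw) by rewrite all_rev.
have hnotL : ~ spanL Delta DL beta.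
  move=> hsp.
  case: hlen => a [b' [[[wx [hwx1 hwx2 hwx3]] _] [[ww [hww1 hww2 hww3]] _] [_ hminv]]].
  have hxn : pos_wrt Phi Delta (- (refl_prod wx *m beta)) by rewrite -hwx3 hxb opprK.
  have [tx [htx1 htx2 htx3]] := exchange hP' hDelta hwx2 hbpos hxn.
  set gam := wv^T *m beta.
  have hgP : gam \in Phi.
    by rewrite /gam hwtr; apply: W_Phi => //; apply: sub_all hrevL.
  have hgsp : spanL Delta DL gam by rewrite /gam hwtr; apply: spanL_W.
  have hwg : wv *m gam = beta by rewrite /gam mulmxA hwo' mul1mx.
  case: (hdich _ hgP) => hgam.
    have hc := neg_image hDelta hDLD
      (fun d hd => longest_neg hP' hDelta hDLD (ex_intro _ sw (conj hsw hwe))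
         hkk hmax hd) hgam hgsp.
    rewrite hwg in hc.
    have hb0 := cone_pointed hDelta (pos_cone hbpos) hc.
    by move: hbP h0; rewrite hb0 => ->.
  set delta := - gam.
  have hwd : wv *m delta = - beta by rewrite /delta mulmxN hwg.
  have hwn : pos_wrt Phi Delta (- (refl_prod ww *m delta)) by rewrite -hww3 hwd opprK.
  have [tw [htw1 htw2 htw3]] := exchange hP' hDelta hww2 hgam hwn.
  have hconj : refl_mx beta *m wv = wv *m refl_mx delta.
    have := refl_conj delta hwo; rewrite hwd refl_neg => ->.
    by rewrite -!mulmxA hwo mulmx1.
  have hbb : refl_mx beta *m refl_mx beta = 1%:M by apply: refl_invol; apply: (root_neq0 hP').
  have hv : v = refl_prod (tx ++ tw).
    rewrite refl_prod_cat -htx3 -htw3 -hwx3 -hww3 -hconj hdec.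
    by rewrite -!mulmxA (mulmxA (refl_mx beta)) hbb mul1mx.
  apply: (hminv (size (tx ++ tw))); last by exists (tx ++ tw); split => //; rewrite all_cat htx2 htw2.
  by rewrite size_cat -hwx1 -hww1 htx1 htw1 addSn addnS ltnS ltnW.
have [hapos hanL] := posnotL_W hP' hDelta hDLD hrevL hbpos hnotL.
rewrite -hwtr in hapos hanL.
have hy : v^T *m g = - (wv^T *m beta).
  by rewrite /beta mulmxN opprK hdec trmx_mul mulmxA.
rewrite hy /neg_root !opprK; split => // hin.
apply: hanL; apply: spanL_simple => //; apply/hDL; split => //.
split => //; rewrite /neg_root hdec -mulmxA (mulmxA wv) hwo' mul1mx hxb opprK.
exact: hgpos.
Qed.
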